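(* Let $\mathcal G$ be a simple connected graph and $\gamma\in\Gamma$. Then the orientations of the edges of $\mathcal G$ can be chosen so that $Vd\ge0$ (componentwise) for all $\varepsilon\ge0$ sufficiently small, where $d=e_1+\varepsilon\gamma$ and $V$ is the PTDF matrix for that orientation.
   Context: $\mathcal G=(\mathcal N,\mathcal E)$ has nodes $\{1,\dots,n\}$ and edges $\{1,\dots,m\}$, each with an orientation. $C\in\mathbb R^{m\times n}$ is the incidence matrix ($C_{e,i}=1$ if $e$ enters $i$, $-1$ if $e$ leaves $i$, $0$ otherwise) and the PTDF matrix is $V=C(C^TC)^+$ ($^+$ = Moore–Penrose pseudoinverse); reversing the orientation of an edge flips the sign of its row of $V$. $e_1$ is the first unit vector and $\Gamma=\{\gamma\in\mathbb R^n:\gamma_1=0,\gamma\ge0,\sum_i\gamma_i=1\}$. *)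

(* Defs.v *)
From HB Require Import structures.
From mathcomp Require Import all_boot all_order all_algebra.
From mathcomp Require Import reals.
Set Implicit Arguments. Unset Strict Implicit. Unset Printing Implicit Defensive.
Import Order.TTheory GRing.Theory Num.Theory.
Local Open Scope ring_scope.

(* A graph with nodes 'I_N (node "1" of the paper is ord0) and edges 'I_m,
   edge e joining tl e and hd e (a reference orientation: tl e -> hd e). *)

Definition simple_graph (N m : nat) (tl hd : 'I_m -> 'I_N) : Prop :=
  (forall e, tl e != hd e) /\
  (forall e f, e != f ->
     ~ ((tl e == tl f) && (hd e == hd f) || (tl e == hd f) && (hd e == tl f))).

Definition adj (N m : nat) (tl hd : 'I_m -> 'I_N) : rel 'I_N :=
  fun i j => [exists e, ((tl e == i) && (hd e == j)) || ((tl e == j) && (hd e == i))].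

Definition connected_graph (N m : nat) (tl hd : 'I_m -> 'I_N) : Prop :=
  forall i j, connect (adj tl hd) i j.

Definition ortail (N m : nat) (o : 'I_m -> bool) (tl hd : 'I_m -> 'I_N) e :=
  if o e then hd e else tl e.
Definition orhead (N m : nat) (o : 'I_m -> bool) (tl hd : 'I_m -> 'I_N) e :=
  if o e then tl e else hd e.

Definition incidence (R : nzRingType) (N m : nat) (src dst : 'I_m -> 'I_N)
  : 'M[R]_(m, N) :=
  \matrix_(e, i) (if dst e == i then 1 else if src e == i then -1 else 0).

Definition is_pinv (R : realType) (p q : nat) (A : 'M[R]_(p, q)) (X : 'M[R]_(q, p))
  : Prop :=
  [/\ A *m X *m A = A, X *m A *m X = X,
      (A *m X)^T = A *m X & (X *m A)^T = X *m A].

(* PTDF matrix V = C (C^T C)^+, given the pseudoinverse X of C^T C *)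
Definition ptdf (R : realType) (N m : nat) (C : 'M[R]_(m, N)) (X : 'M[R]_N)
  : 'M[R]_(m, N) := C *m X.

Definition in_Gamma (R : realType) (N : nat) (g : 'cV[R]_N.+1) : Prop :=
  [/\ g ord0 0 = 0, (forall i, 0 <= g i 0) & \sum_i g i 0 = 1].

Definition e1 (R : realType) (N : nat) : 'cV[R]_N.+1 := delta_mx ord0 0.

(* Main.v *)
Require Import Defs.
From HB Require Import structures.
From mathcomp Require Import all_boot all_order all_algebra.
From mathcomp Require Import reals.
From mathcomp Require Import ring lra.
From Stdlib Require Import Classical.
Import Order.TTheory GRing.Theory Num.Theory.
Local Open Scope ring_scope.

Lemma pinv_uniq (R : realType) p q (A : 'M[R]_(p,q)) X Y :
  is_pinv A X -> is_pinv A Y -> X = Y.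
Proof.
case=> [h1 h2 h3 h4] [k1 k2 k3 k4].
have eX : X = X *m A *m Y.
  transitivity (X *m (A *m X)^T); first by rewrite h3 mulmxA h2.
  transitivity (X *m (X^T *m (A *m Y *m A)^T)); first by rewrite k1 trmx_mul.
  transitivity (X *m (X^T *m (A^T *m (A *m Y)^T))); first by rewrite [(A *m Y *m A)^T]trmx_mul.
  transitivity (X *m ((A *m X)^T *m (A *m Y))); first by rewrite k3 trmx_mul !mulmxA.
  by rewrite h3 !mulmxA h2.
have eY : Y = X *m A *m Y.
  transitivity ((Y *m A)^T *m Y); first by rewrite k4 k2.
  transitivity ((Y *m (A *m X *m A))^T *m Y); first by rewrite h1.
  transitivity ((X *m A)^T *m (Y *m A)^T *m Y).
    by rewrite !mulmxA -[Y *m A *m X *m A]mulmxA trmx_mul.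
  by rewrite h4 k4 -(mulmxA (X *m A)) k2.
by rewrite eX -eY.
Qed.

Definition sgn (R : realType) m (o : 'I_m -> bool) (e : 'I_m) : R :=
  if o e then -1 else 1.
Arguments sgn R {m}.

Lemma inc_flip (R : realType) n m (tl hd : 'I_m -> 'I_n) o e i :
  tl e != hd e ->
  (@incidence R _ _ (ortail o tl hd) (orhead o tl hd)) e i
  = sgn R o e * (@incidence R _ _ tl hd) e i.
Proof.
move=> ne; rewrite /sgn /ortail /orhead !mxE.
case: (o e); last by rewrite mul1r.
have ne' : hd e != tl e by rewrite eq_sym.
case: (tl e =P i) => [<-|_]; case: (hd e =P tl e) => [h|_].
- by move/eqP: ne'.
- by rewrite mulN1r opprK.
- by case: (hd e == i); rewrite ?mulN1r ?oppr0.
- by case: (hd e == i); rewrite ?mulN1r ?oppr0.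
Qed.

Lemma gram_eq (R : realType) n m (tl hd : 'I_m -> 'I_n) o :
  (forall e, tl e != hd e) ->
  let C := @incidence R _ _ (ortail o tl hd) (orhead o tl hd) in
  let C0 := @incidence R _ _ tl hd in
  C^T *m C = C0^T *m C0.
Proof.
move=> ne C C0; apply/matrixP => i j; rewrite [LHS]mxE [RHS]mxE.
apply: eq_bigr => e _.
rewrite [C^T i e]mxE [C0^T i e]mxE /C !inc_flip // /sgn; case: (o e); ring.
Qed.

Lemma row_val (R : realType) n m (tl hd : 'I_m -> 'I_n) o (X : 'M[R]_n) (d : 'cV[R]_n) e :
  tl e != hd e ->
  (@incidence R _ _ (ortail o tl hd) (orhead o tl hd) *m X *m d) e 0
  = sgn R o e * (@incidence R _ _ tl hd *m X *m d) e 0.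
Proof.
move=> ne; rewrite -!mulmxA !mxE mulr_sumr; apply: eq_bigr => i _.
by rewrite inc_flip // mulrA.
Qed.

Theorem mainTheorem2 (R : realType) (n m : nat) (tl hd : 'I_m -> 'I_n.+1)
  (Hsimple : simple_graph tl hd) (Hconn : connected_graph tl hd)
  (gamma : 'cV[R]_n.+1) (Hgamma : in_Gamma gamma) :
  exists o : 'I_m -> bool,
    let C : 'M[R]_(m, n.+1) := @incidence R _ _ (ortail o tl hd) (orhead o tl hd) in
    forall X : 'M[R]_n.+1, is_pinv (C^T *m C) X ->
      exists2 eps0 : R, 0 < eps0 &
        forall eps : R, 0 <= eps -> eps <= eps0 ->
          forall e : 'I_m, 0 <= (ptdf C X *m (@e1 R n + eps *: gamma)) e 0.
Proof.
have ne : forall e, tl e != hd e by case: Hsimple.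
set C0 := @incidence R _ _ tl hd.
case: (classic (exists X0, is_pinv (C0^T *m C0) X0)); last first.
  move=> nX; exists (fun _ => false) => C X HX; exfalso; apply: nX; exists X.
  by rewrite -(@gram_eq R _ _ tl hd (fun _ => false) ne).
case=> X0 HX0.
pose a e := (C0 *m X0 *m @e1 R n) e 0.
pose b e := (C0 *m X0 *m gamma) e 0.
pose o e := (a e < 0) || ((a e == 0) && (b e < 0)).
exists o => C X HX.
have XX0 : X = X0 by apply: pinv_uniq HX _; rewrite /C (@gram_eq R _ _ tl hd o ne).
subst X.
pose a' e := sgn R o e * a e.
pose b' e := sgn R o e * b e.
have val e eps : (ptdf C X0 *m (@e1 R n + eps *: gamma)) e 0 = a' e + eps * b' e.
  rewrite /ptdf mulmxDr -scalemxAr [LHS]mxE [X in _ + X]mxE /C !row_val // /a' /b' /a /b; ring.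
have ha e : 0 <= a' e /\ (a' e = 0 -> 0 <= b' e).
  rewrite /a' /b' /sgn /o; case: ltrgtP => h /=.
  - split; first lra. lra.
  - split; first lra. lra.
  - rewrite h; case: ltrP => hb /=; split; lra.
pose k e := if 0 < a' e then (`|b' e| + 1) / a' e else 0.
have k0 e : 0 <= k e.
  rewrite /k; case: ifP => // /ltW h; apply: divr_ge0 => //; exact: addr_ge0.
pose S := \sum_e k e.
have S0 : 0 <= S by apply: sumr_ge0 => e _.
have kS e : k e <= S.
  by rewrite /S (bigD1 e) //= lerDl; apply: sumr_ge0 => i _.
exists (1 + S)^-1; first by rewrite invr_gt0; lra.
move=> eps he0 he1 e; rewrite val.
have h1 : eps * (1 + S) <= 1.
  by rewrite -(ler_pM2r (_ : 0 < (1 + S)^-1)) ?invr_gt0 -?mulrA ?mulfV ?mulr1 ?mul1r //; lra.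
have [ha1 ha2] := ha e.
have hb : - `|b' e| <= b' e by rewrite lerNl ler_normr lexx orbT.
have nb : 0 <= `|b' e| by [].
case: (ltrP 0 (a' e)) => hpos.
  have hk : a' e * k e = `|b' e| + 1.
    rewrite /k hpos mulrC -mulrA mulVf ?mulr1 //; lra.
  have := kS e => kS'.
  have : a' e * k e <= a' e * S by rewrite ler_pM2l.
  rewrite hk => hS.
  nra.
have -> : a' e = 0 by lra.
have := ha2 (ltac:(lra)); nra.
Qed.
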